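(* (i) Let $S$ be a unital nonassociative ring with multiplication $\circ$ which has a field $K$ as a subring and is a free left $K$-vector space of dimension $m$. Suppose that: (1) there is $t\in S$ such that $t^i$, $0\le i<m$, is a basis of $S$ over $K$, where $t^0=1$ and $t^{i+1}=t\circ t^i$; (2) for all $a\in K$, $a\neq0$, there is $a'\in K^\times$ such that $t\circ a=a'\circ t$; (3) for all $a,b,c\in K$, $i+j<m$, $k<m$, we have $[a\circ t^i,b\circ t^j,c\circ t^k]=0$; (4) $t^m=d$ for some $d\in K^\times$; (5) the map $\sigma:K\to K$, $\sigma(a)=a'$ (with $\sigma(0)=0$), has order $m$ and fixed field $F=\{a\in K\mid t\circ a=a\circ t\}$ containing a primitive $m$th root of unity $\omega$, and $K/F$ is a finite cyclic Galois extension. Then $S\cong S_f=(K/F,\sigma,d)$ with $f(t)=t^m-d\in K[t;\sigma]$. (ii) If moreover $S$ is a right division ring, then $f$ is irreducible and $S\cong(K/F,\sigma,d)$ is a nonassociative cyclic extension of $K$ of degree $m$.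
   Context: $[x,y,z]=(x\circ y)\circ z-x\circ(y\circ z)$ is the associator. $K[t;\sigma]$ is the twisted polynomial ring (polynomials $\sum a_it^i$, multiplication determined by $ta=\sigma(a)t$); $(K/F,\sigma,d)=S_f$ is the set of polynomials of degree $<m$ with multiplication $g\circ h=$ remainder of $gh$ on right division by $f=t^m-d$. A nonassociative ring $S\neq0$ is a right division ring if right multiplication $x\mapsto x\circ a$ is bijective for every $a\ne0$. $f$ is irreducible if not a unit and not a product of two non-units. Definition: if $A$ is a nonassociative division algebra and $D\subseteq A$ an associative division subalgebra, $A$ is a nonassociative cyclic extension of $D$ of degree $m$ if $A$ is a free left $D$-module of rank $m$ and $\mathrm{Aut}(A)$ has a cyclic subgroup $G$ of order $m$ with $H|_D=\mathrm{id}_D$ for all $H\in G$. *)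

(* Defs.v *)
From HB Require Import structures.
From mathcomp Require Import all_boot all_order all_algebra all_fingroup all_solvable all_field.
Set Implicit Arguments.
Unset Strict Implicit.
Unset Printing Implicit Defensive.
Import GRing.Theory.
Local Open Scope ring_scope.

Definition naring (S : zmodType) (mul : S -> S -> S) (one : S) : Prop :=
  [/\ forall x y z, mul (x + y) z = mul x z + mul y z,
      forall x y z, mul x (y + z) = mul x y + mul x z,
      forall x, mul one x = x &
      forall x, mul x one = x].

Definition nassoc (S : zmodType) (mul : S -> S -> S) (x y z : S) : S :=
  mul (mul x y) z - mul x (mul y z).

Definition subring_embedding (K : fieldType) (S : zmodType)
    (mul : S -> S -> S) (one : S) (iota : K -> S) : Prop :=
  [/\ injective iota,
      forall a b, iota (a + b) = iota a + iota b,
      iota 1 = one &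
      forall a b, iota (a * b) = mul (iota a) (iota b)].

(** The left scalar action [a . x := iota a o x] makes [S] a left
    [K]-vector space (the remaining module axioms follow from [naring]
    and [subring_embedding]). *)
Definition left_K_space (K : fieldType) (S : zmodType)
    (mul : S -> S -> S) (iota : K -> S) : Prop :=
  forall a b x, mul (iota (a * b)) x = mul (iota a) (mul (iota b) x).

Definition is_Kbasis (K : fieldType) (S : zmodType) (mul : S -> S -> S)
    (iota : K -> S) (m : nat) (b : 'I_m -> S) : Prop :=
  forall x : S, exists! c : {ffun 'I_m -> K},
    x = \sum_(i < m) mul (iota (c i)) (b i).

Definition free_of_rank (K : fieldType) (S : zmodType) (mul : S -> S -> S)
    (iota : K -> S) (m : nat) : Prop :=
  exists b : 'I_m -> S, is_Kbasis mul iota b.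

Definition tpow (S : Type) (mul : S -> S -> S) (one t : S) (n : nat) : S :=
  iter n (mul t) one.

(** * The twisted polynomial ring K[t;sigma]
    Elements are polynomials [sum a_i t^i] (carried by [{poly K}]) with
    multiplication determined by [t a = sigma(a) t], i.e.
    (a t^i)(b t^j) = a sigma^i(b) t^(i+j). *)
Definition skew_mul (K : fieldType) (sigma : K -> K) (p q : {poly K}) : {poly K} :=
  \poly_(k < (size p + size q).-1)
     \sum_(i < k.+1) p`_i * iter i sigma (q`_(k - i)).

Definition skew_unit (K : fieldType) (sigma : K -> K) (p : {poly K}) : Prop :=
  exists q, skew_mul sigma p q = 1 /\ skew_mul sigma q p = 1.

Definition skew_irreducible (K : fieldType) (sigma : K -> K) (f : {poly K}) : Prop :=
  ~ skew_unit sigma f /\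
  forall g h, f = skew_mul sigma g h -> skew_unit sigma g \/ skew_unit sigma h.

Definition is_rrem (K : fieldType) (sigma : K -> K) (f g r : {poly K}) : Prop :=
  (size r < size f)%N /\ exists q, g = skew_mul sigma q f + r.

(** [phi] is an isomorphism of unital nonassociative rings from [S] onto
    S_f = (K/F,sigma,d), the set of polynomials of degree < m (size <= m)
    with multiplication g o h = remainder of gh on right division by f. *)
Definition iso_to_Sf (K : fieldType) (sigma : K -> K) (m : nat) (f : {poly K})
    (S : zmodType) (mul : S -> S -> S) (one : S) (phi : S -> {poly K}) : Prop :=
  [/\ forall x, (size (phi x) <= m)%N,
      injective phi,
      (forall p : {poly K}, (size p <= m)%N -> exists x, phi x = p),
      forall x y, phi (x + y) = phi x + phi y &
      phi one = 1 /\
      forall x y, is_rrem sigma f (skew_mul sigma (phi x) (phi y)) (phi (mul x y))].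

Definition right_division_ring (S : zmodType) (mul : S -> S -> S) : Prop :=
  (exists x : S, x != 0) /\
  forall a : S, a != 0 -> bijective (fun x => mul x a).

Definition na_automorphism (S : zmodType) (mul : S -> S -> S) (one : S)
    (H : S -> S) : Prop :=
  [/\ bijective H,
      forall x y, H (x + y) = H x + H y,
      forall x y, H (mul x y) = mul (H x) (H y) &
      H one = one].

(** Nonassociative cyclic extension of degree [m] of the associative division
    subalgebra D = iota(K) (K a field):
    A is a nonassociative division algebra, a free left D-module of rank m,
    and Aut(A) has a cyclic subgroup G of order m all of whose elements
    restrict to the identity on D (G is given by a generator H). *)
Definition na_cyclic_extension (K : fieldType) (S : zmodType)
    (mul : S -> S -> S) (one : S) (iota : K -> S) (m : nat) : Prop :=
  [/\ (exists x : S, x != 0),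
      (forall a : S, a != 0 ->
         bijective (fun x => mul a x) /\ bijective (fun x => mul x a)),
      free_of_rank mul iota m &
      exists H : S -> S,
        [/\ na_automorphism mul one H,
            forall a, H (iota a) = iota a,
            forall x, iter m H x = x &
            forall k, (0 < k < m)%N -> exists x, iter k H x != x]].

(* Main.v *)
Require Import Defs.
From HB Require Import structures.
From mathcomp Require Import all_boot all_order all_algebra all_fingroup all_solvable all_field.
From mathcomp Require Import zify ring.
Import GRing.Theory.
Local Open Scope ring_scope.
Set Implicit Arguments.
Unset Strict Implicit.

Section Core.
Variables (K : fieldType) (S : zmodType) (mul : S -> S -> S) (one : S)
  (iota : K -> S) (m' : nat) (t : S) (d : K) (sigma : K -> K).
Local Notation m := m'.+1.
Hypothesis HS : naring mul one.
Hypothesis HK : subring_embedding mul one iota.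
Hypothesis HKsp : left_K_space mul iota.
Hypothesis H1 : is_Kbasis mul iota (fun i : 'I_m => tpow mul one t i).
Hypothesis H3 : forall (a b c : K) (i j k : nat), (i + j < m)%N -> (k < m)%N ->
          nassoc mul (mul (iota a) (tpow mul one t i))
                     (mul (iota b) (tpow mul one t j))
                     (mul (iota c) (tpow mul one t k)) = 0.
Hypothesis H4 : tpow mul one t m = iota d.
Hypothesis Hsigma : forall a : K, mul t (iota a) = mul (iota (sigma a)) t.

Lemma mulDl x y z : mul (x + y) z = mul x z + mul y z. Proof. by case: HS. Qed.
Lemma mulDr x y z : mul x (y + z) = mul x y + mul x z. Proof. by case: HS. Qed.
Lemma mul1x x : mul one x = x. Proof. by case: HS. Qed.
Lemma mulx1 x : mul x one = x. Proof. by case: HS. Qed.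
Lemma mul0x x : mul 0 x = 0.
Proof. by apply: (@addrI _ (mul 0 x)); rewrite -mulDl !addr0. Qed.
Lemma mulx0 x : mul x 0 = 0.
Proof. by apply: (@addrI _ (mul x 0)); rewrite -mulDr !addr0. Qed.
Lemma mulNx x y : mul (- x) y = - mul x y.
Proof. by apply/eqP; rewrite -addr_eq0 -mulDl addNr mul0x. Qed.
Lemma mulxN x y : mul x (- y) = - mul x y.
Proof. by apply/eqP; rewrite -addr_eq0 -mulDr addNr mulx0. Qed.
Lemma mul_suml I r (P : pred I) (F : I -> S) y :
  mul (\sum_(i <- r | P i) F i) y = \sum_(i <- r | P i) mul (F i) y.
Proof. by apply: (big_morph (fun x => mul x y)) => [x z|]; [apply: mulDl|apply: mul0x]. Qed.
Lemma mul_sumr I r (P : pred I) (F : I -> S) y :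
  mul y (\sum_(i <- r | P i) F i) = \sum_(i <- r | P i) mul y (F i).
Proof. by apply: (big_morph (fun x => mul y x)) => [x z|]; [apply: mulDr|apply: mulx0]. Qed.

Lemma iota_inj : injective iota. Proof. by case: HK. Qed.
Lemma iotaD a b : iota (a + b) = iota a + iota b. Proof. by case: HK. Qed.
Lemma iota1 : iota 1 = one. Proof. by case: HK. Qed.
Lemma iotaM a b : iota (a * b) = mul (iota a) (iota b). Proof. by case: HK. Qed.
Lemma iota0 : iota 0 = 0.
Proof. by apply: (@addrI _ (iota 0)); rewrite -iotaD !addr0. Qed.
Lemma iota_sum I r (P : pred I) (F : I -> K) :
  iota (\sum_(i <- r | P i) F i) = \sum_(i <- r | P i) iota (F i).
Proof. by apply: (big_morph iota) => [x z|]; [apply: iotaD|apply: iota0]. Qed.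

Local Notation T i := (tpow mul one t i).
Definition e a i := mul (iota a) (T i).

Lemma T0 : T 0 = one. Proof. by []. Qed.
Lemma TS i : T i.+1 = mul t (T i). Proof. by []. Qed.
Lemma T1 : T 1 = t. Proof. by rewrite TS T0 mulx1. Qed.
Lemma eT i : e 1 i = T i. Proof. by rewrite /e iota1 mul1x. Qed.
Lemma e0i a : e a 0 = iota a. Proof. by rewrite /e T0 mulx1. Qed.
Lemma e0 i : e 0 i = 0. Proof. by rewrite /e iota0 mul0x. Qed.
Lemma eM a b i : mul (iota a) (e b i) = e (a * b) i.
Proof. by rewrite /e HKsp. Qed.
Lemma eD a b i : e (a + b) i = e a i + e b i.
Proof. by rewrite /e iotaD mulDl. Qed.

Lemma assoc a b c i j k : (i + j < m)%N -> (k < m)%N ->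
  mul (mul (e a i) (e b j)) (e c k) = mul (e a i) (mul (e b j) (e c k)).
Proof. by move=> h1 h2; apply/eqP; rewrite -subr_eq0; apply/eqP; apply: H3. Qed.

Definition B (c : {ffun 'I_m -> K}) : S := \sum_(i < m) e (c i) i.

Lemma B_unique c c' : B c = B c' -> c = c'.
Proof.
move=> h; have [c0 [_ u]] := H1 (B c).
by rewrite -(u c) // -(u c') // h.
Qed.

Lemma B_ex x : exists c, x == B c.
Proof. by have [c [h _]] := H1 x; exists c; apply/eqP. Qed.

Definition coef (x : S) : {ffun 'I_m -> K} := xchoose (B_ex x).
Lemma coefK x : B (coef x) = x.
Proof. by rewrite /coef; move: (xchooseP (B_ex x)) => /eqP <-. Qed.
Lemma Bcoef c : coef (B c) = c.
Proof. by apply: B_unique; rewrite coefK. Qed.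
Lemma coef_inj : injective coef.
Proof. by move=> x y h; rewrite -(coefK x) h coefK. Qed.

Lemma B0 : B 0 = 0.
Proof. by rewrite /B big1 // => i _; rewrite ffunE e0. Qed.
Lemma BD c c' : B (c + c') = B c + B c'.
Proof. by rewrite /B -big_split; apply: eq_bigr => i _; rewrite ffunE eD. Qed.
Lemma B_sum I r (P : pred I) (F : I -> {ffun 'I_m -> K}) :
  B (\sum_(i <- r | P i) F i) = \sum_(i <- r | P i) B (F i).
Proof. by apply: (big_morph B) => [x z|]; [apply: BD|apply: B0]. Qed.

Lemma B_delta (c : {ffun 'I_m -> K}) (k : 'I_m) v :
  (forall n : 'I_m, c n = if n == k then v else 0) -> B c = e v k.
Proof.
move=> hc; rewrite /B (bigD1 k) //= big1 ?addr0 ?hc ?eqxx // => i /negPf ik.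
by rewrite hc ik e0.
Qed.

Lemma coefSD x y : coef (x + y) = coef x + coef y.
Proof. by apply: B_unique; rewrite BD !coefK. Qed.
Lemma coefS0 : coef 0 = 0.
Proof. by apply: B_unique; rewrite B0 coefK. Qed.


Ltac simpA h := rewrite ?eT ?e0i ?T1 in h.

Lemma tb i b : (i < m)%N -> mul (T i) (iota b) = e (iter i sigma b) i.
Proof.
elim: i => [|i IH] hi; first by rewrite T0 mul1x e0i.
have hi' : (i < m)%N by apply: ltnW.
have A1 := @assoc 1 1 b 1 i 0 hi (ltn0Sn _); simpA A1.
rewrite TS A1 IH //.
set c := iter i sigma b.
have A2 := @assoc 1 c 1 1 0 i ltac:(lia) hi'; simpA A2.
rewrite /e -A2 Hsigma.
have A3 := @assoc (sigma c) 1 1 0 1 i ltac:(lia) hi'; simpA A3.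
by rewrite A3 -TS.
Qed.

Lemma TT i j : (i + j < m)%N -> mul (T i) (T j) = T (i + j).
Proof.
elim: i => [|i IH] hi; first by rewrite T0 mul1x.
have h1 : (1 + i < m)%N by rewrite add1n (leq_ltn_trans _ hi) // leq_addr.
have h2 : (j < m)%N by rewrite (leq_ltn_trans _ hi) // leq_addl.
have A1 := @assoc 1 1 1 1 i j h1 h2; simpA A1.
by rewrite TS A1 IH // (leq_trans _ hi).
Qed.

Lemma tT c k : (k.+1 < m)%N -> mul t (e c k) = e (sigma c) k.+1.
Proof.
move=> hk; have hk' : (k < m)%N by apply: ltnW.
have A2 := @assoc 1 c 1 1 0 k ltac:(lia) hk'; simpA A2.
rewrite /e -A2 Hsigma.
have A3 := @assoc (sigma c) 1 1 0 1 k ltac:(lia) hk'; simpA A3.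
by rewrite A3 -TS.
Qed.

Lemma TTbig i j : (i < m)%N -> (j < m)%N -> (m <= i + j)%N ->
  mul (T i) (T j) = e (iter (i + j - m) sigma d) (i + j - m).
Proof.
elim: i => [|i IH] hi hj hij; first by rewrite add0n leqNgt hj in hij.
have hi' : (i < m)%N by apply: ltnW.
have h1 : (1 + i < m)%N by rewrite add1n.
have A1 := @assoc 1 1 1 1 i j h1 hj; simpA A1.
rewrite TS A1.
case: (leqP m (i + j)) => h.
  rewrite IH //.
  have -> : (i.+1 + j - m = (i + j - m).+1)%N by rewrite addSn subSn.
  by rewrite tT //; lia.
rewrite TT //.
have -> : (i + j = m')%N by lia.
have -> : (i.+1 + j - m = 0)%N by lia.
by rewrite -TS H4 e0i.
Qed.

Lemma prod_pre a b i j : (i < m)%N -> (j < m)%N ->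
  mul (e a i) (e b j) = mul (iota a) (mul (iota (iter i sigma b)) (mul (T i) (T j))).
Proof.
move=> hi hj.
have A1 := @assoc a 1 b 0 i j ltac:(lia) hj; simpA A1.
rewrite {1}/e A1.
have A2 := @assoc 1 b 1 i 0 j ltac:(lia) hj; simpA A2.
rewrite /e -A2 tb //.
have A3 := @assoc (iter i sigma b) 1 1 0 i j ltac:(lia) hj; simpA A3.
by rewrite /e A3.
Qed.

Definition w (i j n : nat) : K :=
  (if (i + j == n)%N then 1 else 0) + (if (i + j == n + m)%N then iter n sigma d else 0).

Lemma eprod a b (i j : 'I_m) :
  mul (e a i) (e b j) = B [ffun n : 'I_m => a * iter i sigma b * w i j n].
Proof.
rewrite prod_pre //.
case: (ltnP (i + j) m) => h.
  rewrite TT // -/(e _ _) eM; symmetry; apply: (@B_delta _ (Ordinal h)) => n.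
  rewrite ffunE /w.
  have -> : (i + j == n + m)%N = false.
    by apply/negP => /eqP hh; move: h; rewrite hh ltnNge leq_addl.
  by rewrite addr0 -(inj_eq val_inj) /= eq_sym; case: eqP; rewrite ?mulr1 ?mulr0.
have hk : (i + j - m < m)%N.
  by have := ltn_ord i; have := ltn_ord j; lia.
rewrite TTbig // eM eM; symmetry; apply: (@B_delta _ (Ordinal hk)) => n.
rewrite ffunE /w.
have -> : (i + j == n)%N = false.
  by apply/negP => /eqP hh; move: h; rewrite hh leqNgt ltn_ord.
rewrite add0r -(inj_eq val_inj) /=.
have -> : (i + j == n + m)%N = (i + j - m == n)%N.
  apply/eqP/eqP => [->|<-]; first by rewrite addnK.
  by rewrite subnK.
rewrite eq_sym; case: eqP => [->|]; rewrite ?mulr0 ?mulrA //.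
Qed.

Definition prodc (c c' : {ffun 'I_m -> K}) : {ffun 'I_m -> K} :=
  [ffun n : 'I_m => \sum_(i < m) \sum_(j < m) c i * iter i sigma (c' j) * w i j n].

Lemma coef_mul x y : coef (mul x y) = prodc (coef x) (coef y).
Proof.
rewrite -{1}(coefK x) -{1}(coefK y) /B mul_suml.
under eq_bigr => i _ do rewrite mul_sumr.
have -> : \sum_i \sum_j mul (e (coef x i) i) (e (coef y j) j) = B (\sum_i \sum_j [ffun n : 'I_m => coef x i * iter i sigma (coef y j) * w i j n]).
  rewrite B_sum; apply: eq_bigr => i _; rewrite B_sum; apply: eq_bigr => j _.
  by rewrite eprod.
rewrite Bcoef.
apply/ffunP => n; rewrite !ffunE sum_ffunE; apply: eq_bigr => i _.
by rewrite sum_ffunE; apply: eq_bigr => j _; rewrite ffunE.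
Qed.


Hypothesis Hsm : forall a, iter m sigma a = a.

Lemma e_inj1 a b : (1 < m)%N -> e a 1 = e b 1 -> a = b.
Proof.
move=> hm h.
have hd : forall v, B [ffun n : 'I_m => if n == Ordinal hm then v else 0] = e v 1.
  by move=> v; apply: (@B_delta _ (Ordinal hm)) => n; rewrite ffunE.
move: h; rewrite -!hd => /B_unique /ffunP /(_ (Ordinal hm)).
by rewrite !ffunE eqxx.
Qed.

Lemma Hsig_e a : mul t (iota a) = e (sigma a) 1.
Proof. by rewrite Hsigma /e T1. Qed.

Lemma sigD a b : sigma (a + b) = sigma a + sigma b.
Proof.
case: (posnP m') => hm.
  by have := Hsm; rewrite hm => Hs; rewrite ?(Hs : forall a, sigma a = a).
apply: e_inj1; first by lia.
by rewrite eD -!Hsig_e iotaD mulDr.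
Qed.

Lemma sigM a b : sigma (a * b) = sigma a * sigma b.
Proof.
case: (posnP m') => hm.
  by have := Hsm; rewrite hm => Hs; rewrite ?(Hs : forall a, sigma a = a).
apply: e_inj1; first by lia.
rewrite -Hsig_e iotaM.
have A1 := @assoc 1 a b 1 0 0 ltac:(lia) ltac:(lia); simpA A1.
rewrite -A1 Hsigma.
have A2 := @assoc (sigma a) 1 b 0 1 0 ltac:(lia) ltac:(lia); simpA A2.
by rewrite A2 Hsig_e eM.
Qed.

Lemma sig1 : sigma 1 = 1.
Proof.
case: (posnP m') => hm.
  by have := Hsm; rewrite hm => Hs; rewrite ?(Hs : forall a, sigma a = a).
apply: e_inj1; first by lia.
by rewrite -Hsig_e iota1 mulx1 eT T1.
Qed.

Lemma sig0 : sigma 0 = 0.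
Proof. by apply: (@addrI _ (sigma 0)); rewrite -sigD !addr0. Qed.

Local Notation s i := (iter i sigma).

Lemma sD i a b : s i (a + b) = s i a + s i b.
Proof. by elim: i => //= i ->; rewrite sigD. Qed.
Lemma sM i a b : s i (a * b) = s i a * s i b.
Proof. by elim: i => //= i ->; rewrite sigM. Qed.
Lemma s0 i : s i 0 = 0.
Proof. by elim: i => //= i ->; rewrite sig0. Qed.
Lemma s1 i : s i 1 = 1.
Proof. by elim: i => //= i ->; rewrite sig1. Qed.
Lemma sN i a : s i (- a) = - s i a.
Proof. by apply/eqP; rewrite -addr_eq0 -sD addNr s0. Qed.
Lemma sB i a b : s i (a - b) = s i a - s i b.
Proof. by rewrite sD sN. Qed.

Lemma skew_coef p q k :
  (skew_mul sigma p q)`_k = \sum_(i < k.+1) p`_i * s i (q`_(k - i)%N).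
Proof.
rewrite /skew_mul coef_poly; case: ifP => // h; symmetry; apply: big1 => i _.
case: (ltnP i (size p)) => hi; last by rewrite nth_default // mul0r.
rewrite (@nth_default _ _ q) ?s0 ?mulr0 //.
move/negbT: h; rewrite -leqNgt; have := ltn_ord i; lia.
Qed.

Lemma skewDl p p' q : skew_mul sigma (p + p') q = skew_mul sigma p q + skew_mul sigma p' q.
Proof.
apply/polyP => k; rewrite coefD !skew_coef -big_split; apply: eq_bigr => i _.
by rewrite coefD mulrDl.
Qed.

Lemma skewBr p q q' : skew_mul sigma p (q - q') = skew_mul sigma p q - skew_mul sigma p q'.
Proof.
apply/polyP => k; rewrite coefB !skew_coef -sumrB; apply: eq_bigr => i _.
by rewrite coefB sB mulrBr.
Qed.

Lemma skew_monoR p c j n :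
  (skew_mul sigma p (c *: 'X^j))`_n = if (j <= n)%N then p`_(n - j) * s (n - j) c else 0.
Proof.
rewrite skew_coef; case: ifP => hj.
  have hk : (n - j < n.+1)%N by lia.
  rewrite (bigD1 (Ordinal hk)) //= big1 ?addr0.
    by rewrite coefZ coefXn (_ : n - (n - j) == j)%N ?mulr1 //; apply/eqP; lia.
  move=> i /eqP hi; rewrite coefZ coefXn (_ : n - i == j = false)%N ?mulr0 ?s0 ?mulr0 //.
  apply/negP => /eqP hh; apply: hi; apply: val_inj => /=; have := ltn_ord i; lia.
apply: big1 => i _; rewrite coefZ coefXn (_ : n - i == j = false)%N ?mulr0 ?s0 ?mulr0 //.
apply/negP => /eqP hh; have := ltn_ord i; lia.
Qed.

Lemma conv_reindex (g : nat -> nat -> K) k :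
  (forall i j, (m <= i)%N || (m <= j)%N -> g i j = 0) ->
  \sum_(i < k.+1) g i (k - i)%N =
  \sum_(i < m) \sum_(j < m) (if (i + j == k)%N then g i j else 0).
Proof.
move=> hg.
have inner : forall i : 'I_m, \sum_(j < m) (if (i + j == k)%N then g i j else 0)
                = if (i <= k)%N then g i (k - i)%N else 0.
  move=> i; case: ifP => hik.
    case: (ltnP (k - i)%N m) => hki.
      rewrite (bigD1 (Ordinal hki)) //= big1 ?addr0.
        by rewrite (_ : i + (k - i) == k)%N //; apply/eqP; lia.
      move=> j /eqP hj; case: eqP => // hh; exfalso; apply: hj; apply: val_inj => /=; lia.
    rewrite hg ?hki ?orbT //; apply: big1 => j _; case: eqP => // hh.
    by have := ltn_ord j; lia.
  apply: big1 => j _; case: eqP => // hh; exfalso; move/negbT: hik; lia.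
under [RHS]eq_bigr => i _ do rewrite inner.
rewrite (big_ord_widen (m + k.+1) (fun i => g i (k - i)%N)); last by lia.
rewrite (big_ord_widen (m + k.+1) (fun i => if (i <= k)%N then g i (k - i)%N else 0)); last by lia.
rewrite [LHS]big_mkcond [RHS]big_mkcond; apply: eq_bigr => i _.
case: (ltnP i k.+1) => h1; case: (ltnP i m) => h2 //=.
- by case: leqP => // h; exfalso; lia.
- by rewrite hg // h2.
- by case: ifP => // h; exfalso; lia.
Qed.

Definition pc (c : {ffun 'I_m -> K}) : {poly K} := \poly_(i < m) c (inord i).

Lemma pc_coef c k : (pc c)`_k = if (k < m)%N then c (inord k) else 0.
Proof. by rewrite coef_poly. Qed.
Lemma pc_coefo c (n : 'I_m) : (pc c)`_n = c n.
Proof. by rewrite pc_coef ltn_ord inord_val. Qed.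
Lemma pc_coefbig c k : (m <= k)%N -> (pc c)`_k = 0.
Proof. by move=> h; rewrite pc_coef ltnNge h. Qed.
Lemma pc_size c : (size (pc c) <= m)%N.
Proof. exact: size_poly. Qed.
Lemma pc_inj : injective pc.
Proof. by move=> c c' h; apply/ffunP => n; rewrite -!pc_coefo h. Qed.
Lemma pc_surj (p : {poly K}) : (size p <= m)%N -> pc [ffun n : 'I_m => p`_n] = p.
Proof.
move=> hp; apply/polyP => k; rewrite pc_coef; case: ifP => hk.
  by rewrite ffunE inordK.
by rewrite nth_default //; move/negbT: hk; rewrite -leqNgt; apply: leq_trans.
Qed.
Lemma pcD c c' : pc (c + c') = pc c + pc c'.
Proof. by apply/polyP => k; rewrite coefD !pc_coef; case: ifP; rewrite ?ffunE ?addr0. Qed.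

Lemma convP c c' k :
  (skew_mul sigma (pc c) (pc c'))`_k =
  \sum_(i < m) \sum_(j < m) (if (i + j == k)%N then c i * s i (c' j) else 0).
Proof.
rewrite skew_coef (conv_reindex (g := fun i j => (pc c)`_i * s i ((pc c')`_j))).
  apply: eq_bigr => i _; apply: eq_bigr => j _; by rewrite !pc_coefo.
move=> i j /orP [] h; first by rewrite pc_coefbig // mul0r.
by rewrite (pc_coefbig _ h) s0 mulr0.
Qed.

Lemma convP_big c c' k : (m + m' <= k)%N -> (skew_mul sigma (pc c) (pc c'))`_k = 0.
Proof.
move=> h; rewrite convP big1 // => i _; rewrite big1 // => j _.
case: eqP => // hh; have := ltn_ord i; have := ltn_ord j; lia.
Qed.

Lemma prodc_coef c c' (n : 'I_m) :
  (pc (prodc c c'))`_n = (skew_mul sigma (pc c) (pc c'))`_n +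
     (skew_mul sigma (pc c) (pc c'))`_(n + m) * s n d.
Proof.
rewrite pc_coefo ffunE !convP mulr_suml -big_split; apply: eq_bigr => i _.
rewrite mulr_suml -big_split; apply: eq_bigr => j _.
rewrite /w mulrDr; congr (_ + _); case: ifP; rewrite ?mulr1 ?mulr0 ?mul0r //.
Qed.

Definition fpol := 'X^m - d%:P.

Lemma size_fpol : size fpol = m.+1.
Proof. by rewrite /fpol size_XnsubC. Qed.

Lemma rrem_main c c' :
  is_rrem sigma fpol (skew_mul sigma (pc c) (pc c')) (pc (prodc c c')).
Proof.
split; first by rewrite size_fpol ltnS pc_size.
set P := skew_mul sigma (pc c) (pc c').
exists (\poly_(k < m) P`_(k + m)).
apply/polyP => k; rewrite coefD.
have -> : fpol = 1 *: 'X^m - d *: 'X^0.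
  by rewrite /fpol scale1r expr0 -alg_polyC.
have hQ : forall n, (\poly_(k0 < m) P`_(k0 + m))`_n = if (n < m)%N then P`_(n + m) else 0.
  by move=> n; rewrite coef_poly.
rewrite skewBr coefB !skew_monoR /= subn0 s1 mulr1 !hQ.
case: (ltnP k m) => hk.
  rewrite -(inordK hk) prodc_coef inordK // -/P; ring.
rewrite mul0r subr0 pc_coefbig // addr0.
case: ifP => hk2; first by rewrite subnK.
rewrite convP_big //; move/negbT: hk2; lia.
Qed.


Definition delta (k : 'I_m) (v : K) : {ffun 'I_m -> K} :=
  [ffun n : 'I_m => if n == k then v else 0].

Lemma B_delta' k v : B (delta k v) = e v k.
Proof. by apply: B_delta => n; rewrite ffunE. Qed.

Lemma coef_e (k : 'I_m) v : coef (e v k) = delta k v.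
Proof. by rewrite -B_delta' Bcoef. Qed.

Lemma coef_iota v : coef (iota v) = delta ord0 v.
Proof. by rewrite -(e0i v) (coef_e ord0). Qed.

Lemma coef_one : coef one = delta ord0 1.
Proof. by rewrite -iota1 coef_iota. Qed.

Lemma pc_delta0 v : pc (delta ord0 v) = v%:P.
Proof.
apply/polyP => k; rewrite pc_coef coefC ffunE; case: ifP => hk.
  by rewrite -(inj_eq val_inj) /= inordK.
by case: eqP => // hk0; rewrite hk0 in hk.
Qed.

Lemma pc0 : pc 0 = 0.
Proof. by apply/polyP => k; rewrite pc_coef coef0; case: ifP; rewrite ?ffunE. Qed.

Definition phi (x : S) : {poly K} := pc (coef x).

Lemma iso_main : iso_to_Sf sigma m fpol mul one phi.
Proof.
split.
- by move=> x; apply: pc_size.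
- by move=> x y /pc_inj /coef_inj.
- by move=> p hp; exists (B [ffun n : 'I_m => p`_n]); rewrite /phi Bcoef pc_surj.
- by move=> x y; rewrite /phi coefSD pcD.
split; first by rewrite /phi coef_one pc_delta0.
by move=> x y; rewrite /phi coef_mul; apply: rrem_main.
Qed.

Lemma sig_inj : injective sigma.
Proof.
move=> a b h; rewrite -(Hsm a) -(Hsm b) !iterSr h //.
Qed.

Lemma s_inj i : injective (s i).
Proof. by elim: i => // i IH a b /= /sig_inj /IH. Qed.

Lemma s_eq0 i a : (s i a == 0) = (a == 0).
Proof. by apply/eqP/eqP => [h|->]; [apply: (@s_inj i); rewrite h s0 | rewrite s0]. Qed.

Lemma skew0l q : skew_mul sigma 0 q = 0.
Proof. by apply/polyP => k; rewrite skew_coef coef0 big1 // => i _; rewrite coef0 mul0r. Qed.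

Lemma skew0r p : skew_mul sigma p 0 = 0.
Proof. by apply/polyP => k; rewrite skew_coef coef0 big1 // => i _; rewrite coef0 s0 mulr0. Qed.

Lemma skewBl p p' q : skew_mul sigma (p - p') q = skew_mul sigma p q - skew_mul sigma p' q.
Proof.
apply/polyP => k; rewrite coefB !skew_coef -sumrB; apply: eq_bigr => i _.
by rewrite coefB mulrBl.
Qed.

Lemma skew_size p q : p != 0 -> q != 0 ->
  size (skew_mul sigma p q) = (size p + size q).-1.
Proof.
move=> hp hq; rewrite /skew_mul; apply: size_poly_eq.
have sp : (0 < size p)%N by rewrite size_poly_gt0.
have sq : (0 < size q)%N by rewrite size_poly_gt0.
have hk : ((size p).-1 < ((size p + size q).-1.-1).+1)%N by lia.
rewrite (bigD1 (Ordinal hk)) //= big1 ?addr0.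
  rewrite (_ : ((size p + size q).-1.-1 - (size p).-1 = (size q).-1)%N); last by lia.
  by rewrite mulf_neq0 // ?s_eq0 -lead_coefE lead_coef_eq0.
move=> i /eqP hi.
case: (ltnP i (size p).-1) => h.
  rewrite (@nth_default _ _ q) ?s0 ?mulr0 //; move: h; clear hi hk; have := ltn_ord i; move: (nat_of_ord i) => i0; clear i; move: sp sq; move: (size p) (size q) => a b; lia.
rewrite (@nth_default _ _ p) ?mul0r //.
have : (i : nat) <> (size p).-1 by move=> hh; apply: hi; apply: val_inj.
lia.
Qed.


Lemma skew_constR_coef p c n : (skew_mul sigma p c%:P)`_n = p`_n * s n c.
Proof.
have -> : c%:P = c *: 'X^0 by rewrite expr0 -alg_polyC.
by rewrite skew_monoR subn0.
Qed.

Lemma skew_const c c' : skew_mul sigma c%:P c'%:P = (c * c')%:P.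
Proof.
apply/polyP => n; rewrite skew_constR_coef !coefC.
by case: eqP => [->|]; rewrite ?mul0r.
Qed.

Lemma unit_const c : c != 0 -> skew_unit sigma c%:P.
Proof.
move=> hc; exists (c^-1)%:P; rewrite !skew_const mulfV ?mulVf //.
Qed.

Lemma skew1l q : skew_mul sigma 1 q = q.
Proof.
apply/polyP => k; rewrite skew_coef big_ord_recl /= coef1 /= mul1r subn0 big1 ?addr0 //.
by move=> i _; rewrite coef1 /= mul0r.
Qed.

Lemma fpol_neq0 : fpol != 0.
Proof. by rewrite -size_poly_gt0 size_fpol. Qed.

Lemma rrem_f0 r : is_rrem sigma fpol fpol r -> r = 0.
Proof.
case=> hr [q hq].
have hr' : r = skew_mul sigma (1 - q) fpol by rewrite skewBl skew1l {1}hq addrC addKr.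
case: (eqVneq (1 - q) 0) => h; first by rewrite hr' h skew0l.
move: hr; rewrite hr' skew_size ?fpol_neq0 // size_fpol.
have := size_poly_gt0 (1 - q); rewrite h /=; move: (size (1 - q)) => a; lia.
Qed.

Lemma nzd : right_division_ring mul -> forall x y, mul x y = 0 -> y != 0 -> x = 0.
Proof.
case=> _ hb x y hxy hy; have [g gK _] := hb y hy.
by rewrite -(gK x) /= hxy -{1}(mul0x y) gK.
Qed.

Lemma irred_main : right_division_ring mul -> skew_irreducible sigma fpol.
Proof.
move=> hrd; split.
  case=> q [h _]; case: (eqVneq q 0) => hq.
    by move: h; rewrite hq skew0r => /eqP; rewrite eq_sym oner_eq0.
  move: (congr1 (fun p : {poly K} => size p) h); rewrite /= skew_size ?fpol_neq0 // size_fpol size_poly1.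
  have := size_poly_gt0 q; rewrite hq /=; move: (size q) => a; lia.
move=> g h hf.
have hg : g != 0 by apply/eqP => hg; move: fpol_neq0; rewrite hf hg skew0l eqxx.
have hh : h != 0 by apply/eqP => hh; move: fpol_neq0; rewrite hf hh skew0r eqxx.
have szg := size_poly_gt0 g; have szh := size_poly_gt0 h; rewrite hg in szg; rewrite hh in szh.
case: (leqP (size g) 1) => hg1.
  left; rewrite (size1_polyC hg1); apply: unit_const.
  by move: hg; rewrite {1}(size1_polyC hg1) polyC_eq0.
case: (leqP (size h) 1) => hh1.
  right; rewrite (size1_polyC hh1); apply: unit_const.
  by move: hh; rewrite {1}(size1_polyC hh1) polyC_eq0.
exfalso.
have hsz := congr1 (fun p : {poly K} => size p) hf; rewrite /= in hsz; rewrite skew_size // size_fpol in hsz.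
have hgm : (size g <= m)%N by move: hsz hg1 hh1; move: (size g) (size h) => a b; lia.
have hhm : (size h <= m)%N by move: hsz hg1 hh1; move: (size g) (size h) => a b; lia.
set x := B [ffun n : 'I_m => g`_n]; set y := B [ffun n : 'I_m => h`_n].
have px : phi x = g by rewrite /phi Bcoef pc_surj.
have py : phi y = h by rewrite /phi Bcoef pc_surj.
have := rrem_main (coef x) (coef y); rewrite -coef_mul -!/(phi _) px py -hf.
move/rrem_f0; rewrite /phi => h0.
have : coef (mul x y) = coef 0 by apply: pc_inj; rewrite h0 coefS0 pc0.
move/coef_inj/(nzd hrd) => hx.
have y0 : y != 0 by apply/eqP => y0; move: py; rewrite y0 /phi coefS0 pc0 => h0'; move: hh; rewrite -h0' eqxx.
by move: px; rewrite (hx y0) /phi coefS0 pc0 => g0; move: hg; rewrite -g0 eqxx.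
Qed.


Lemma s_fix i a : sigma a = a -> s i a = a.
Proof. by move=> h; elim: i => //= i ->. Qed.

Lemma s_exp i a j : sigma a = a -> s i (a ^+ j) = a ^+ j.
Proof. by move=> h; elim: j => [|j IH]; rewrite ?expr0 ?s1 // exprS sM IH s_fix. Qed.

Lemma prodc_lin c (ka : K) (f g : {ffun 'I_m -> K}) : sigma ka = ka ->
  prodc c [ffun n => ka * f n + g n] = [ffun n => ka * prodc c f n + prodc c g n].
Proof.
move=> hk; apply/ffunP => n; rewrite !ffunE mulr_sumr -big_split; apply: eq_bigr => i _.
rewrite mulr_sumr -big_split; apply: eq_bigr => j _.
rewrite ffunE sD sM s_fix // /=; ring.
Qed.

Definition Hm (om : K) (x : S) := B [ffun n : 'I_m => om ^+ n * coef x n].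

Lemma iterH om k x : iter k (Hm om) x = B [ffun n : 'I_m => om ^+ (n * k) * coef x n].
Proof.
elim: k => [|k IH] /=.
  by rewrite -{1}(coefK x); congr B; apply/ffunP => n; rewrite ffunE muln0 expr0 mul1r.
rewrite IH /Hm Bcoef; congr B; apply/ffunP => n; rewrite !ffunE mulrA -exprD mulnS.
by [].
Qed.

Lemma iterHm om x : om ^+ m = 1 -> iter m (Hm om) x = x.
Proof.
move=> h; rewrite iterH -{2}(coefK x); congr B; apply/ffunP => n.
by rewrite ffunE mulnC exprM h expr1n mul1r.
Qed.

Lemma Hm_bij om : om ^+ m = 1 -> bijective (Hm om).
Proof.
move=> h; exists (iter m' (Hm om)) => x.
  by rewrite -iterSr iterHm.
by rewrite -iterS iterHm.
Qed.

Lemma Hm_add om x y : Hm om (x + y) = Hm om x + Hm om y.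
Proof.
rewrite /Hm -BD coefSD; congr B; apply/ffunP => n; by rewrite !ffunE mulrDr.
Qed.

Lemma Hm_iota om a : Hm om (iota a) = iota a.
Proof.
rewrite /Hm coef_iota -e0i -(B_delta' ord0); congr B; apply/ffunP => n.
rewrite !ffunE; case: eqP => [->|]; by rewrite ?expr0 ?mul1r ?mulr0.
Qed.

Lemma ww om i j n : om ^+ m = 1 -> om ^+ n * w i j n = om ^+ (i + j) * w i j n.
Proof.
move=> h; rewrite /w !mulrDr; case: eqP => [->|_]; case: eqP => [->|_] //.
all: by rewrite ?exprD ?h ?mulr1 ?mulr0.
Qed.

Lemma Hm_mul om x y : om ^+ m = 1 -> sigma om = om ->
  Hm om (mul x y) = mul (Hm om x) (Hm om y).
Proof.
move=> h1 h2; apply: coef_inj; rewrite coef_mul /Hm !Bcoef coef_mul.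
apply/ffunP => n; rewrite !ffunE mulr_sumr; apply: eq_bigr => i _.
rewrite mulr_sumr; apply: eq_bigr => j _; rewrite !ffunE sM s_exp //.
transitivity (coef x i * s i (coef y j) * (om ^+ n * w i j n)); first by ring.
by rewrite ww // exprD; ring.
Qed.

Lemma Hm_nid om k : m.-primitive_root om -> (0 < k < m)%N ->
  exists x, iter k (Hm om) x != x.
Proof.
move=> hp /andP [k0 km].
have h1 : (1 < m)%N by lia.
exists (e 1 (Ordinal h1)); apply/eqP => h.
have := congr1 coef h; rewrite iterH Bcoef coef_e => /ffunP /(_ (Ordinal h1)).
rewrite !ffunE eqxx mulr1 mul1n => /eqP; rewrite -(prim_order_dvd hp) => hd.
by move: (dvdn_leq k0 hd); rewrite leqNgt km.
Qed.


Lemma inj_surj_bij (A C : choiceType) (f : A -> C) :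
  injective f -> (forall y, exists x, f x = y) -> bijective f.
Proof.
move=> fi fs.
have hPf : forall y, exists x, f x == y.
  by move=> y; case: (fs y) => x hx; exists x; apply/eqP.
exists (fun y => xchoose (hPf y)).
  by move=> x; apply: fi; apply/eqP; exact: (xchooseP (hPf (f x))).
by move=> y; apply/eqP; exact: (xchooseP (hPf y)).
Qed.

Lemma left_inj a : right_division_ring mul -> a != 0 -> injective (mul a).
Proof.
move=> hrd ha x y h; apply/eqP; rewrite -subr_eq0; apply/eqP.
have h0 : mul a (x - y) = 0 by rewrite mulDr mulxN h addrN.
case: (eqVneq (x - y) 0) => // hxy.
by move: ha; rewrite (nzd hrd h0 hxy) eqxx.
Qed.

Lemma prodc_inj a : right_division_ring mul -> a != 0 -> injective (prodc (coef a)).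
Proof.
move=> hrd ha c c' h; apply: B_unique; apply: (left_inj hrd ha); apply: coef_inj.
by rewrite !coef_mul !Bcoef h.
Qed.

Lemma left_bij a : right_division_ring mul -> a != 0 ->
  (forall y, exists c, prodc (coef a) c = y) -> bijective (mul a).
Proof.
move=> hrd ha hs; apply: inj_surj_bij; first exact: left_inj.
move=> y; have [c hc] := hs (coef y); exists (B c); apply: coef_inj.
by rewrite coef_mul Bcoef.
Qed.

End Core.

Lemma inj_lin_surj (F0 : fieldType) (vT : vectType F0) (g : vT -> vT) :
  linear g -> injective g -> forall y, exists x, g x = y.
Proof.
move=> lg ig y.
pose gM := GRing.isLinear.Build _ _ _ _ g lg.
pose gL : {linear _ -> _} := HB.pack g gM.
have kf : lker (linfun gL) == 0%VS.
  by apply/lker0P => u v; rewrite !(lfunE gL); apply: ig.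
exists ((linfun gL)^-1%VF y).
by rewrite -[g _](lfunE gL) lker0_lfunVK.
Qed.

Theorem theorem4p2
  (F0 : fieldType) (K : splittingFieldType F0) (F : {subfield K})
  (S : zmodType) (mul : S -> S -> S) (one : S) (iota : K -> S) (m : nat)
  (t : S) (d : K) (sigma : K -> K)
  (HS : naring mul one)
  (HK : subring_embedding mul one iota)
  (HKsp : left_K_space mul iota)
  (Hfree : free_of_rank mul iota m)
  (* (1) *)
  (H1 : is_Kbasis mul iota (fun i : 'I_m => tpow mul one t i))
  (* (2) *)
  (H2 : forall a : K, a != 0 ->
          exists a' : K, a' != 0 /\ mul t (iota a) = mul (iota a') t)
  (* (3) *)
  (H3 : forall (a b c : K) (i j k : nat), (i + j < m)%N -> (k < m)%N ->
          nassoc mul (mul (iota a) (tpow mul one t i))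
                     (mul (iota b) (tpow mul one t j))
                     (mul (iota c) (tpow mul one t k)) = 0)
  (* (4) *)
  (H4d : d != 0) (H4 : tpow mul one t m = iota d)
  (* (5) the map sigma : a |-> a' (sigma 0 = 0) *)
  (Hsigma : forall a : K, mul t (iota a) = mul (iota (sigma a)) t)
  (Hsig_ord : (forall a, iter m sigma a = a) /\
              forall k, (0 < k < m)%N -> exists a, iter k sigma a != a)
  (HFfix : forall a : K, (a \in F) = (sigma a == a))
  (HFcomm : forall a : K, a \in F <-> mul t (iota a) = mul (iota a) t)
  (Homega : exists omega : K, omega \in F /\ m.-primitive_root omega)
  (Hgal : galois F {:K} /\ cyclic 'Gal({:K} / F)) :
  let f := 'X^m - d%:P in
  (exists phi : S -> {poly K}, iso_to_Sf sigma m f mul one phi) /\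
  (right_division_ring mul ->
     skew_irreducible sigma f /\
     (exists phi : S -> {poly K}, iso_to_Sf sigma m f mul one phi) /\
     na_cyclic_extension mul one iota m).
Proof.
case: m Hfree H1 H3 H4d H4 Hsig_ord Homega => [|m'] Hfree H1 H3 H4d H4 Hsig_ord Homega f; rewrite /f.
  exfalso; have [c [hc _]] := H1 one; rewrite big_ord0 in hc.
  have h10 : iota 1 = iota 0 by rewrite (iota1 HK) (iota0 HK).
  by move: (iota_inj HK h10) => /eqP; rewrite oner_eq0.
have Hsm := Hsig_ord.1.
have iso := iso_main HS HK HKsp H1 H3 H4 Hsigma Hsm.
split; first by eexists; exact: iso.
move=> hrd; split; first exact: (irred_main HS HK HKsp H1 H3 H4 Hsigma Hsm hrd).
split; first by eexists; exact: iso.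
have [om [omF omP]] := Homega.
have som : sigma om = om by apply/eqP; rewrite -HFfix.
have omm : om ^+ m'.+1 = 1 := prim_expr_order omP.
split.
- by case: hrd.
- move=> a ha; split; last by case: hrd => _ /(_ a ha).
  apply: (left_bij HS HK HKsp H3 H4 Hsigma hrd ha).
  apply: inj_lin_surj; last exact: (prodc_inj HS HK HKsp H3 H4 Hsigma hrd ha).
  move=> k x y.
  have hk : sigma (k%:A) = k%:A by apply/eqP; rewrite -HFfix; apply: memvZ; apply: mem1v.
  have -> : k *: x + y = [ffun n => k%:A * x n + y n].
    by apply/ffunP => i; rewrite !ffunE mulr_algl.
  rewrite (prodc_lin d HS HK HKsp H1 H3 Hsigma Hsm) //.
  by apply/ffunP => i; rewrite !ffunE mulr_algl.
- exact: Hfree.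
exists (Hm H1 om); split.
- split.
  + exact: Hm_bij.
  + exact: Hm_add.
  + by move=> x y; apply: (Hm_mul HS HK HKsp H1 H3 H4 Hsigma Hsm).
  + by have := Hm_iota HS HK H1 om 1; rewrite (iota1 HK).
- by move=> a; rewrite Hm_iota.
- by move=> x; apply: iterHm.
- by move=> k hk; apply: (Hm_nid HS HK H1 omP hk).
Qed.
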